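(* Let $E\subseteq\mathbb{R}$, let $\theta=(k_r)$ be a lacunary sequence, and let $f:E\to\mathbb{R}$ be Abel continuous on $E$. Then $f$ is lacunary statistically sequentially continuous on $E$ (with respect to $\theta$).
   Context: A sequence $(p_n)$ of real numbers is Abel convergent to $\ell$ if $\sum_{k=0}^{\infty}p_k x^k$ converges for every $0\le x<1$ and $\lim_{x\to 1^-}(1-x)\sum_{k=0}^{\infty}p_k x^k=\ell$. $f$ is Abel continuous on $E$ if for every sequence $(p_n)$ in $E$ Abel convergent to some $\ell\in E$, $(f(p_n))$ is Abel convergent to $f(\ell)$. A lacunary sequence is an increasing sequence $\theta=(k_r)_{r\ge0}$ of nonnegative integers with $k_0=0$, $h_r=k_r-k_{r-1}\to\infty$, and $\liminf_r k_r/k_{r-1}>1$; put $I_r=(k_{r-1},k_r]$. A sequence $(p_k)$ is lacunary statistically convergent to $\ell$ if for every $\varepsilon>0$, $\lim_{r\to\infty}\frac{1}{h_r}|\{k\in I_r:|p_k-\ell|\ge\varepsilon\}|=0$. $f$ is lacunary statistically sequentially continuous on $E$ if for every sequence $(p_n)$ in $E$ lacunary statistically convergent to some $\ell\in E$, $(f(p_n))$ is lacunary statistically convergent to $f(\ell)$. *)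

(* Defs.v *)
From Stdlib Require Import Reals List.
From Coquelicot Require Import Coquelicot.
Open Scope R_scope.

Definition abel_convergent (p : nat -> R) (l : R) : Prop :=
  (forall x : R, 0 <= x < 1 -> ex_series (fun k => p k * x ^ k)) /\
  filterlim (fun x => (1 - x) * Series (fun k => p k * x ^ k))
            (at_left 1) (locally l).

Definition abel_continuous_on (E : R -> Prop) (f : R -> R) : Prop :=
  forall (p : nat -> R) (l : R),
    (forall n, E (p n)) -> E l -> abel_convergent p l ->
    abel_convergent (fun n => f (p n)) (f l).

Definition lacunary (k : nat -> nat) : Prop :=
  k 0%nat = 0%nat /\
  (forall r, (k r < k (S r))%nat) /\
  is_lim_seq (fun r => INR (k (S r) - k r)) p_infty /\
  Rbar_lt (Finite 1) (LimInf_seq (fun r => INR (k (S r)) / INR (k r))).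

Definition lac_h (k : nat -> nat) (r : nat) : nat := (k r - k (pred r))%nat.

(* |{ j in I_r = (k_{r-1}, k_r] : |p_j - l| >= eps }|, for r >= 1 *)
Definition lac_count (k : nat -> nat) (p : nat -> R) (l eps : R) (r : nat) : nat :=
  length (filter (fun j => if Rle_dec eps (Rabs (p j - l)) then true else false)
                 (seq (S (k (pred r))) (lac_h k r))).

Definition lacunary_statistically_convergent (k : nat -> nat) (p : nat -> R) (l : R) : Prop :=
  forall eps : R, 0 < eps ->
    is_lim_seq (fun r => INR (lac_count k p l eps r) / INR (lac_h k r)) 0.

Definition lacunary_statistically_sequentially_continuous_on
    (k : nat -> nat) (E : R -> Prop) (f : R -> R) : Prop :=
  forall (p : nat -> R) (l : R),
    (forall n, E (p n)) -> E l -> lacunary_statistically_convergent k p l ->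
    lacunary_statistically_convergent k (fun n => f (p n)) (f l).

(* Main.v *)
Require Import Defs.
From Stdlib Require Import Reals.
From Coquelicot Require Import Coquelicot.
From Stdlib Require Import Lra Lia List Classical ClassicalEpsilon.
From Corelib Require Import ssreflect.
Open Scope R_scope.

Lemma pow_le1 (x : R) (n : nat) : 0 <= x <= 1 -> x ^ n <= 1.
Proof.
  intros Hx; induction n as [|n IH]; simpl; [lra|].
  have := pow_le x n ltac:(lra). nra.
Qed.

Lemma geom_sum (x : R) : 0 <= x < 1 -> is_series (fun k => x ^ k) (/ (1 - x)).
Proof. intros Hx; apply is_series_geom; rewrite Rabs_right; lra. Qed.

Lemma shift_lemma (a : nat -> R) c x : 0 <= x < 1 ->
  ex_series (fun k => a k * x ^ k) ->
  (1 - x) * Series (fun k => a k * x ^ k) - c =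
  (1 - x) * Series (fun k => (a k - c) * x ^ k).
Proof.
  intros Hx [S HS].
  have Hg := is_series_scal c _ _ (geom_sum x Hx).
  have Hm := is_series_minus _ _ _ _ HS Hg.
  rewrite (is_series_unique _ _ HS).
  assert (Hm' : is_series (fun k => (a k - c) * x ^ k) (plus S (opp (scal c (/ (1 - x)))))).
  { eapply is_series_ext; [|exact Hm]. intros n. unfold plus, opp, scal; simpl. unfold mult; simpl. ring. }
  rewrite (is_series_unique _ _ Hm').
  unfold plus, opp, scal; simpl. unfold mult; simpl. field. lra.
Qed.

Lemma abel_lower (a : nat -> R) c s eps x : Rabs s = 1 -> 0 < eps -> 0 <= x < 1 ->
  (forall k, eps <= s * (a k - c)) ->
  ex_series (fun k => a k * x ^ k) ->
  eps <= s * ((1 - x) * Series (fun k => a k * x ^ k) - c).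
Proof.
  intros Hs He Hx Hk Hex.
  rewrite shift_lemma //.
  destruct Hex as [S HS].
  have Hg := is_series_scal c _ _ (geom_sum x Hx).
  have Hm := is_series_minus _ _ _ _ HS Hg.
  have Hm2 := is_series_scal s _ _ Hm.
  assert (Hexb : ex_series (fun k => s * ((a k - c) * x ^ k))).
  { eexists. eapply is_series_ext; [|exact Hm2]. intros n.
    unfold plus, opp, scal; simpl. unfold mult; simpl. ring. }
  assert (Hle : Series (fun k => eps * x ^ k) <= Series (fun k => s * ((a k - c) * x ^ k))).
  { apply Series_le; auto. intros n. have := pow_le x n ltac:(lra). split.
    - apply Rmult_le_pos; lra.
    - rewrite -Rmult_assoc. apply Rmult_le_compat_r; auto. }
  rewrite (Series_scal_l eps) (Series_scal_l s) in Hle.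
  rewrite (is_series_unique _ _ (geom_sum x Hx)) in Hle.
  replace (s * ((1 - x) * Series (fun k => (a k - c) * x ^ k)))
    with ((1 - x) * (s * Series (fun k => (a k - c) * x ^ k))) by ring.
  replace eps with ((1 - x) * (eps * / (1 - x))) at 1 by (field; lra).
  apply Rmult_le_compat_l; lra.
Qed.

Lemma abel_of_fast (q : nat -> R) l : (forall n, Rabs (q n - l) <= (/2) ^ n) ->
  abel_convergent q l.
Proof.
  intros Hq.
  have Hex : forall x, 0 <= x < 1 -> ex_series (fun k => q k * x ^ k).
  { intros x Hx. apply (@ex_series_le R_AbsRing R_CompleteNormedModule _ (fun k => (Rabs l + 1) * x ^ k)).
    - intros n. change (norm (q n * x ^ n)) with (Rabs (q n * x ^ n)).
      rewrite Rabs_mult (Rabs_right (x ^ n)); [|apply Rle_ge, pow_le; lra].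
      apply Rmult_le_compat_r; [apply pow_le; lra|].
      have := Hq n. have : (/2)^n <= 1 by (apply pow_le1; lra).
      have := Rabs_triang_inv (q n) l. lra.
    - exists ((Rabs l + 1) * / (1 - x)); exact (is_series_scal (Rabs l + 1) _ _ (geom_sum x Hx)). }
  split; auto.
  apply filterlim_locally. intros eps.
  exists (mkposreal (Rmin 1 (eps / 2)) ltac:(apply Rmin_pos; have := cond_pos eps; lra)).
  intros y Hy Hy1. simpl in Hy. change (Rabs (y - 1) < Rmin 1 (eps/2)) in Hy.
  change (Rabs ((1 - y) * Series (fun k => q k * y ^ k) - l) < eps).
  have Hm1 := Rmin_l 1 (eps/2). have Hm2 := Rmin_r 1 (eps/2).
  rewrite Rabs_left in Hy; [|lra].
  have Hy0 : 0 <= y < 1 by lra.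
  rewrite shift_lemma //; auto.
  have Hb : ex_series (fun n => Rabs ((q n - l) * y ^ n)).
  { apply (@ex_series_le R_AbsRing R_CompleteNormedModule _ (fun k => (/2) ^ k)).
    - intros n. change (norm (Rabs ((q n - l) * y ^ n))) with (Rabs (Rabs ((q n - l) * y ^ n))).
      rewrite Rabs_Rabsolu Rabs_mult (Rabs_right (y ^ n)); [|apply Rle_ge, pow_le; lra].
      have := pow_le1 y n ltac:(lra). have := pow_le y n ltac:(lra). have := Hq n.
      have := Rabs_pos (q n - l). nra.
    - eexists; apply geom_sum; lra. }
  have H1 := Series_Rabs _ Hb.
  have H2 : Series (fun n => Rabs ((q n - l) * y ^ n)) <= Series (fun k => (/2) ^ k).
  { apply Series_le; [|eexists; apply geom_sum; lra].
    intros n; split; [apply Rabs_pos|].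
    rewrite Rabs_mult (Rabs_right (y ^ n)); [|apply Rle_ge, pow_le; lra].
    have := pow_le1 y n ltac:(lra). have := pow_le y n ltac:(lra). have := Hq n.
    have := Rabs_pos (q n - l). nra. }
  rewrite (is_series_unique _ _ (geom_sum (/2) ltac:(lra))) in H2.
  replace (/ (1 - / 2)) with 2 in H2 by field.
  rewrite Rabs_mult (Rabs_right (1 - y)); [|lra].
  have := Rabs_pos (Series (fun k => (q k - l) * y ^ k)).
  have := cond_pos eps. nra.
Qed.

Lemma no_one_sided (E : R -> Prop) f l s eps : abel_continuous_on E f -> E l ->
  Rabs s = 1 -> 0 < eps ->
  (forall d, 0 < d -> exists x, E x /\ Rabs (x - l) < d /\ eps <= s * (f x - f l)) ->
  False.
Proof.
  intros Hac El Hs He H.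
  have Hp : forall n, 0 < (/2) ^ n by (intros n; apply pow_lt; lra).
  set q := fun n => proj1_sig (constructive_indefinite_description _ (H _ (Hp n))).
  have Hqp : forall n, E (q n) /\ Rabs (q n - l) < (/2)^n /\ eps <= s * (f (q n) - f l).
  { intros n. exact (proj2_sig (constructive_indefinite_description _ (H _ (Hp n)))). }
  have Hab : abel_convergent q l.
  { apply abel_of_fast. intros n; left; apply Hqp. }
  destruct (Hac q l (fun n => proj1 (Hqp n)) El Hab) as [Hex Hlim].
  apply filterlim_locally with (eps := mkposreal eps He) in Hlim.
  destruct Hlim as [d Hd].
  set y := Rmax 0 (1 - d / 2).
  have Hd0 := cond_pos d.
  have Hy0 : 0 <= y < 1.
  { unfold y; split; [apply Rmax_l|]. apply Rmax_lub_lt; lra. }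
  have Hy := Hd y.
  assert (Hball : ball 1 d y).
  { change (Rabs (y - 1) < d). rewrite Rabs_left; [|lra].
    unfold y. have := Rmax_r 0 (1 - d/2). have := Rmax_l 0 (1 - d/2).
    unfold Rmax; destruct Rle_dec; lra. }
  specialize (Hy Hball (proj2 Hy0)).
  change (Rabs ((1 - y) * Series (fun k => f (q k) * y ^ k) - f l) < eps) in Hy.
  have Hlow := abel_lower (fun k => f (q k)) (f l) s eps y Hs He Hy0
    (fun k => proj2 (proj2 (Hqp k))) (Hex y Hy0).
  have := Rle_abs (s * ((1 - y) * Series (fun k => f (q k) * y ^ k) - f l)).
  rewrite Rabs_mult Hs. lra.
Qed.

Lemma abel_cont (E : R -> Prop) f l : abel_continuous_on E f -> E l ->
  forall eps, 0 < eps -> exists d, 0 < d /\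
    forall x, E x -> Rabs (x - l) < d -> Rabs (f x - f l) < eps.
Proof.
  intros Hac El eps He.
  apply NNPP; intros Hn.
  assert (Hall : forall d, 0 < d -> exists x, E x /\ Rabs (x - l) < d /\ eps <= Rabs (f x - f l)).
  { intros d Hd. apply NNPP; intros Hx. apply Hn. exists d; split; auto.
    intros x Ex Hxl. apply Rnot_le_lt. intros Hc. apply Hx. eauto. }
  destruct (classic (forall d, 0 < d -> exists x, E x /\ Rabs (x - l) < d /\ eps <= 1 * (f x - f l))) as [H1|H1].
  { apply (no_one_sided E f l 1 eps); auto. rewrite Rabs_R1; auto. }
  destruct (classic (forall d, 0 < d -> exists x, E x /\ Rabs (x - l) < d /\ eps <= -1 * (f x - f l))) as [H2|H2].
  { apply (no_one_sided E f l (-1) eps); auto. rewrite Rabs_Ropp Rabs_R1; auto. }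
  apply not_all_ex_not in H1 as [d1 H1]. apply imply_to_and in H1 as [Hd1 H1].
  apply not_all_ex_not in H2 as [d2 H2]. apply imply_to_and in H2 as [Hd2 H2].
  destruct (Hall (Rmin d1 d2) ltac:(apply Rmin_pos; auto)) as [x [Ex [Hxl Hfx]]].
  have := Rmin_l d1 d2. have := Rmin_r d1 d2.
  unfold Rabs in Hfx. destruct Rcase_abs.
  - intros; apply H2. exists x; repeat split; auto; lra.
  - intros; apply H1. exists x; repeat split; auto; lra.
Qed.

Lemma filter_len_le {A} (P Q : A -> bool) (xs : list A) :
  (forall j, P j = true -> Q j = true) ->
  (length (filter P xs) <= length (filter Q xs))%nat.
Proof.
  intros H; induction xs as [|a xs IH]; simpl; auto.
  destruct (P a) eqn:Pa.
  - rewrite (H a Pa). simpl; lia.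
  - destruct (Q a); simpl; lia.
Qed.

Theorem corollary3 (E : R -> Prop) (k : nat -> nat) (f : R -> R) :
  lacunary k ->
  abel_continuous_on E f ->
  lacunary_statistically_sequentially_continuous_on k E f.
Proof.
  intros _ Hac p l Ep El Hp eps He.
  destruct (abel_cont E f l Hac El eps He) as [d [Hd Hcont]].
  apply (is_lim_seq_le_le (fun _ => 0) _ (fun r => INR (lac_count k p l d r) / INR (lac_h k r)));
    [|apply is_lim_seq_const|apply Hp; exact Hd].
  intros r.
  have Hinv : 0 <= / INR (lac_h k r).
  { destruct (Nat.eq_dec (lac_h k r) 0) as [E0|E0].
    - rewrite E0 /= Rinv_0; lra.
    - left; apply Rinv_0_lt_compat, lt_0_INR; lia. }
  unfold Rdiv; split.
  - apply Rmult_le_pos; [apply pos_INR|exact Hinv].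
  - apply Rmult_le_compat_r; [exact Hinv|]. apply le_INR.
    unfold lac_count. apply filter_len_le. intros j.
    destruct (Rle_dec eps (Rabs (f (p j) - f l))) as [H1|H1]; [|discriminate].
    destruct (Rle_dec d (Rabs (p j - l))) as [H2|H2]; auto.
    intros _. exfalso. have := Hcont (p j) (Ep j) ltac:(lra). lra.
Qed.
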